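(* Let $d\ge 2$ and let $c_0,\dots,c_7\in\mathbb{Z}_d$. If the $d$-state first degree cellular automaton with parameters $\langle c_0,\dots,c_7\rangle$ is reversible for every number of cells $n\in\mathbb{N}$ under the null boundary condition, then $c_0\equiv c_1\equiv c_2\equiv c_3\equiv 0 \pmod{\mathrm{rad}(d)}$.
   Context: Fix an integer $d\ge 2$ and the state set $S=\mathbb{Z}_d=\{0,1,\dots,d-1\}$. A first degree cellular automaton (FDCA) with parameters $\langle c_0,\dots,c_7\rangle$, $c_i\in\mathbb{Z}_d$, is the one-dimensional 3-neighborhood cellular automaton whose local rule $R:S^3\to S$ is $R(x,y,z)=c_0xyz+c_1xy+c_2xz+c_3yz+c_4x+c_5y+c_6z+c_7 \pmod d$. For $n\in\mathbb{N}$, $n\ge1$, the $n$-cell automaton under the null boundary condition acts on configurations $x=(x_0,\dots,x_{n-1})\in S^n$ by the global map $G_n:S^n\to S^n$, $G_n(x)_i=R(x_{i-1},x_i,x_{i+1})$ for $0\le i\le n-1$, with the convention $x_{-1}=x_n=0$. The automaton is reversible for a given $n$ if $G_n$ is a bijection. $\mathrm{rad}(d)=\prod_{p\mid d,\ p\text{ prime}}p$ is the product of the distinct primes dividing $d$; since $\mathrm{rad}(d)\mid d$, congruences of elements of $\mathbb{Z}_d$ modulo $\mathrm{rad}(d)$ are well defined. *)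

(* Defs.v *)
From mathcomp Require Import all_boot.
Set Implicit Arguments. Unset Strict Implicit. Unset Printing Implicit Defensive.

Definition rad (d : nat) : nat := \prod_(p <- primes d) p.

Definition fdca_rule (d : nat) (c : 'I_8 -> 'I_d) (x y z : nat) : nat :=
  (c (inord 0) * x * y * z + c (inord 1) * x * y + c (inord 2) * x * z
   + c (inord 3) * y * z + c (inord 4) * x + c (inord 5) * y
   + c (inord 6) * z + c (inord 7)) %% d.

Lemma fdca_rule_lt d (hd : 0 < d) (c : 'I_8 -> 'I_d) x y z : fdca_rule c x y z < d.
Proof. by rewrite /fdca_rule ltn_pmod. Qed.

(* cell value with null boundary: x_{-1} = x_n = 0 *)
Definition cell (d n : nat) (x : {ffun 'I_n -> 'I_d}) (i : nat) : nat :=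
  match insub i : option 'I_n with Some j => nat_of_ord (x j) | None => 0 end.

Definition fdca_global (d : nat) (hd : 0 < d) (c : 'I_8 -> 'I_d) (n : nat)
  (x : {ffun 'I_n -> 'I_d}) : {ffun 'I_n -> 'I_d} :=
  [ffun i : 'I_n =>
     Ordinal (fdca_rule_lt hd c (if i is Ordinal 0 _ then 0 else cell x i.-1) (cell x i) (cell x i.+1))].

Definition fdca_reversible (d : nat) (hd : 0 < d) (c : 'I_8 -> 'I_d) (n : nat) : Prop :=
  bijective (fdca_global hd c (n:=n)).

(* Main.v *)
From mathcomp Require Import all_boot all_algebra.
Require Import Defs.
Set Warnings "-notation-overridden,-ambiguous-paths".

From mathcomp Require Import ring.
Set Implicit Arguments. Unset Strict Implicit. Unset Printing Implicit Defensive.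
Import GRing.Theory.

Section Gen.
Local Open Scope ring_scope.
Variable F : fieldType.
Variable C : nat -> F.

Definition Rf (x y z : F) : F :=
  C 0 * x * y * z + C 1 * x * y + C 2 * x * z + C 3 * y * z + C 4 * x + C 5 * y + C 6 * z + C 7.
Definition cellf n (s : {ffun 'I_n -> F}) (i : nat) : F :=
  match insub i : option 'I_n with Some j => s j | None => 0 end.
Definition Gf n (s : {ffun 'I_n -> F}) : {ffun 'I_n -> F} :=
  [ffun i : 'I_n => Rf (if i is Ordinal 0 _ then 0 else cellf s i.-1) (cellf s i) (cellf s i.+1)].

Hypothesis Hinj : forall n, (1 <= n)%N -> injective (@Gf n).

Definition E (l : seq F) (i : nat) :=
  Rf (if i is 0 then 0 else nth 0 l i.-1) (nth 0 l i) (nth 0 l i.+1).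

Lemma cellf_nth n (l : seq F) k : size l = n ->
  cellf [ffun i : 'I_n => nth 0 l i] k = nth 0 l k.
Proof.
move=> Hs; rewrite /cellf; case: insubP => [j _ <-|]; first by rewrite ffunE.
by rewrite -leqNgt -Hs => H; rewrite nth_default.
Qed.

Lemma no_coll n (l l' : seq F) : (0 < n)%N -> size l = n -> size l' = n ->
  (forall i, (i < n)%N -> E l i = E l' i) -> l = l'.
Proof.
move=> Hn Hl Hl' HE.
have Hv : [ffun i : 'I_n => nth 0 l i] = [ffun i : 'I_n => nth 0 l' i].
  apply: Hinj => //; apply/ffunP => i; rewrite !ffunE.
  have := HE i (ltn_ord i); rewrite /E.
  by case: i => [[|k] Hk] /=; rewrite !cellf_nth.
apply: (@eq_from_nth _ 0); first by rewrite Hl Hl'.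
move=> i; rewrite Hl => Hi.
by have := congr1 (fun f : {ffun 'I_n -> F} => f (Ordinal Hi)) Hv; rewrite !ffunE.
Qed.

Ltac fin := rewrite /E /Rf /=.
Lemma c5_neq0 : C 5 != 0.
Proof.
apply/eqP => H.
suff: [:: 0] = [:: 1] :> seq F by move=> [] /eqP; rewrite eq_sym oner_eq0.
apply: (@no_coll 1) => //.
by case=> // _; fin; rewrite H; ring.
Qed.

Lemma c3_eq0 : C 3 = 0.
Proof.
apply/eqP; apply/negPn/negP => H3.
have H5 := c5_neq0.
pose a := C 6 / C 3. pose b := C 5 / C 3.
pose s1 := C 5 - C 1 * a.
have [Hs|Hs] := eqVneq s1 0.
  suff: [:: -a; 0] = [:: -a; 1] :> seq F by move=> [] /eqP; rewrite eq_sym oner_eq0.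
  apply: (@no_coll 2) => //.
  case=> [|[|]] // _; fin; rewrite /a.
    by field.
  move: Hs; rewrite /s1 /a => /eqP; rewrite subr_eq0 => /eqP Hs.
  by rewrite Hs; field.
pose g := C 1 * (- a + 1) * (- b) + C 4 * (- a + 1) + C 5 * (- b) + C 7.
pose y1 := (g + C 4 * a - C 7) / s1.
suff: [:: -a + 1; -b] = [:: -a; y1] :> seq F.
  by move=> [] /(congr1 (fun t => t + a)); rewrite addrAC !addNr add0r => /eqP; rewrite oner_eq0.
apply: (@no_coll 2) => //.
case=> [|[|]] // _; fin.
  by rewrite /a /b /y1 /g; field; rewrite Hs H3.
rewrite /y1 /g; move: Hs; rewrite /s1 /a /b => Hs.
field; rewrite H3 /=.
have -> : C 5 * C 3 - C 1 * C 6 = (C 5 - C 1 * (C 6 / C 3)) * C 3 by field.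
by rewrite mulf_neq0.
Qed.

Lemma c1_eq0 : C 1 = 0.
Proof.
apply/eqP; apply/negPn/negP => H1.
have H5 := c5_neq0. have H3 := c3_eq0.
pose bt := C 6 / C 5.
pose u := (C 1 * bt + C 4 * bt - C 5) / C 1.
suff: [:: u; 0] = [:: u - bt; 1] :> seq F by move=> [] _ /eqP; rewrite eq_sym oner_eq0.
apply: (@no_coll 2) => //.
case=> [|[|]] // _; fin; rewrite H3 /u /bt; field; by rewrite ?H1 ?H5.
Qed.

Lemma c0_eq0 : C 0 = 0.
Proof.
apply/eqP; apply/negPn/negP => H0.
have H5 := c5_neq0. have H3 := c3_eq0. have H1 := c1_eq0.
pose bt := C 6 / C 5. pose dt := C 4 / C 5.
pose K := C 2 * bt * dt + C 4 * bt + C 6 * dt - C 5.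
pose W := C 0 * K + C 2 ^+ 2 * bt * dt.
pose X := (1 + C 2 * bt) / C 0. pose Z := (W + C 2 * dt) / C 0.
suff: [:: X + bt; 0; Z + dt] = [:: X; 1; Z] :> seq F by move=> [] _ /eqP; rewrite eq_sym oner_eq0.
apply: (@no_coll 3) => //.
case=> [|[|[|]]] // _; fin; rewrite H3 H1 /X /Z /W /K /bt /dt; field; by rewrite ?H0 ?H5.
Qed.

Lemma c2_eq0 : C 2 = 0.
Proof.
apply/eqP; apply/negPn/negP => H2.
have H5 := c5_neq0. have H3 := c3_eq0. have H1 := c1_eq0. have H0 := c0_eq0.
pose bt := C 6 / C 5. pose dt := C 4 / C 5.
pose K := C 2 * bt * dt + C 4 * bt + C 6 * dt - C 5.
have [H4|H4] := eqVneq (C 4) 0; last first.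
  pose X := - K / (C 2 * dt). pose Z : F := 0.
  suff: [:: X + bt; 0; Z + dt] = [:: X; 1; Z] :> seq F by move=> [] _ /eqP; rewrite eq_sym oner_eq0.
  apply: (@no_coll 3) => //.
  case=> [|[|[|]]] // _; fin; rewrite H3 H1 H0 /X /Z /K /bt /dt; field; by rewrite ?H2 ?H4 ?H5.
have [H6|H6] := eqVneq (C 6) 0; last first.
  pose Z := - K / (C 2 * bt). pose X : F := 0.
  suff: [:: X + bt; 0; Z + dt] = [:: X; 1; Z] :> seq F by move=> [] _ /eqP; rewrite eq_sym oner_eq0.
  apply: (@no_coll 3) => //.
  case=> [|[|[|]]] // _; fin; rewrite H3 H1 H0 /X /Z /K /bt /dt; field; by rewrite ?H2 ?H6 ?H5.
pose t := C 5 / C 2.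
suff: [:: t; 0; 0; t] = [:: t; 1; -1; t] :> seq F by move=> [] /eqP; rewrite eq_sym oner_eq0.
apply: (@no_coll 4) => //.
case=> [|[|[|[|]]]] // _; fin; rewrite H3 H1 H0 H4 H6 /t; field; by rewrite ?H2 ?H5.
Qed.
End Gen.
Lemma prod_primes_dvd (s : seq nat) m : uniq s -> all prime s ->
  (forall p, p \in s -> p %| m) -> \prod_(p <- s) p %| m.
Proof.
elim: s => [|q s IH] /=; first by rewrite big_nil dvd1n.
case/andP=> qs us /andP[pq ps] H.
rewrite big_cons Gauss_dvd.
  by rewrite H ?mem_head // IH // => p ps'; apply: H; rewrite in_cons ps' orbT.
elim: s qs ps {IH H us} => [|r s IH2] /=; first by rewrite big_nil coprimen1.
rewrite in_cons negb_or => /andP[qr qs] /andP[pr ps].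
rewrite big_cons coprimeMr IH2 // andbT prime_coprime // dvdn_prime2 //.
Qed.

Lemma surj_inj (T : finType) (f : T -> T) : (forall y, exists x, f x = y) -> injective f.
Proof.
move=> Hs.
have Hg : forall y, {x | f x == y}.
  by move=> y; apply: sigW; have [x Hx] := Hs y; exists x; apply/eqP.
pose g y := sval (Hg y).
have gK : cancel g f by move=> y; rewrite /g; case: (Hg y) => x /= /eqP.
have bg : bijective g by apply: injF_bij; apply: can_inj gK.
by apply: (can_inj (g := g)); exact: (iffRL (bij_can_sym bg f) gK).
Qed.

Section Red.
Variables (d p : nat) (hd : 1 < d) (c : 'I_8 -> 'I_d).
Hypothesis (pp : prime p) (pd : p %| d).
Local Open Scope ring_scope.

Definition Cp (k : nat) : 'F_p := (c (inord k) : nat)%:R.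

Lemma natr_modd m : ((m %% d)%N%:R : 'F_p) = m%:R.
Proof.
have d0 : (d%:R : 'F_p) = 0 by apply/eqP; rewrite -(dvdn_pcharf (pchar_Fp pp)).
by rewrite {2}(divn_eq m d) natrD natrM d0 mulr0 add0r.
Qed.

Definition red n (x : {ffun 'I_n -> 'I_d}) : {ffun 'I_n -> 'F_p} :=
  [ffun i => ((x i : nat)%:R : 'F_p)].

Lemma cell_red n (x : {ffun 'I_n -> 'I_d}) k : cellf (red x) k = (cell x k)%:R.
Proof. by rewrite /cellf /cell; case: insubP => [j _ _|_]; rewrite ?ffunE. Qed.

Lemma Gf_red n (x : {ffun 'I_n -> 'I_d}) :
  Gf Cp (red x) = red (fdca_global (ltnW hd) c x).
Proof.
apply/ffunP => i; rewrite !ffunE /= /fdca_rule natr_modd /Rf.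
case: i => [[|k] Hk] /=; rewrite !cell_red !natrD !natrM //.
Qed.

Lemma Gf_inj n : (1 <= n)%N -> fdca_reversible (ltnW hd) c n -> injective (Gf Cp (n:=n)).
Proof.
move=> _ [ginv gK Kg]; apply: surj_inj => t.
have Ht : forall i, (val (t i) < d)%N.
  move=> i; apply: leq_trans (ltn_ord (t i)) _.
  by rewrite Fp_cast // dvdn_leq // ltnW.
pose y := [ffun i => Ordinal (Ht i)].
exists (red (ginv y)); rewrite Gf_red Kg; apply/ffunP => i.
by rewrite !ffunE /= natr_Zp.
Qed.
End Red.

Theorem lemma2 (d : nat) (hd : 1 < d) (c : 'I_8 -> 'I_d) :
  (forall n : nat, 1 <= n -> fdca_reversible (ltnW hd) c n) ->
  forall i : 'I_8, i < 4 -> c i %% rad d = 0.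
Proof.
move=> Hrev i Hi; apply/eqP; rewrite -/(dvdn _ _).
apply: prod_primes_dvd; [exact: primes_uniq | by apply/allP => p; rewrite mem_primes => /andP[] |].
move=> p; rewrite mem_primes => /and3P[pp _ pd].
have Hinj : forall n, (1 <= n)%N -> injective (Gf (Cp (d:=d) p c) (n:=n)).
  by move=> n n1; apply: Gf_inj => //; apply: Hrev.
have H : forall k, (k < 4)%N -> Cp (d:=d) p c k = 0%R.
  case=> [|[|[|[|]]]] // _.
  - exact: c0_eq0 Hinj.
  - exact: c1_eq0 Hinj.
  - exact: c2_eq0 Hinj.
  - exact: c3_eq0 Hinj.
have := H i Hi; rewrite /Cp inord_val => /eqP.
by rewrite -(dvdn_pcharf (pchar_Fp pp)).
Qed.
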